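(* Let $L$ be a right Leibniz algebra. Then $L$ is prime if and only if $\mathrm{ran}_L(I)=\{0\}$ for every nonzero ideal $I$ of $L$.
   Context: A right Leibniz algebra satisfies $[x,[y,z]]=[[x,y],z]-[[x,z],y]$. Ideals: subspaces $I$ with $[I,L]\subseteq I$, $[L,I]\subseteq I$. $L$ is prime if $[I,J]\ne\{0\}$ for any two nonzero ideals $I,J$ (where $[I,J]$ is the span of $[x,y]$, $x\in I$, $y\in J$). $\mathrm{ran}_L(I)=\{x\in L:[y,x]=0\ \forall y\in I\}$. *)

(* Defs.v *)
From HB Require Import structures.
From mathcomp Require Import all_boot all_algebra.
Set Implicit Arguments. Unset Strict Implicit. Unset Printing Implicit Defensive.
Import GRing.Theory.
Local Open Scope ring_scope.

(* A (not necessarily finite-dimensional) algebra over a field F is an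
   F-vector space V together with a bilinear bracket br. Subsets of V are
   predicates V -> Prop. *)
Section Leibniz.
Variables (F : fieldType) (V : lmodType F).

Definition bilinear_bracket (br : V -> V -> V) : Prop :=
  (forall (a : F) (x y z : V), br (a *: x + y) z = a *: br x z + br y z) /\
  (forall (a : F) (x y z : V), br z (a *: x + y) = a *: br z x + br z y).

Definition right_leibniz_identity (br : V -> V -> V) : Prop :=
  forall x y z : V, br x (br y z) = br (br x y) z - br (br x z) y.

Definition right_leibniz_algebra (br : V -> V -> V) : Prop :=
  bilinear_bracket br /\ right_leibniz_identity br.

Definition subspace (S : V -> Prop) : Prop :=
  S 0 /\ (forall x y, S x -> S y -> S (x + y)) /\
  (forall (a : F) x, S x -> S (a *: x)).

Definition ideal (br : V -> V -> V) (I : V -> Prop) : Prop :=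
  subspace I /\ (forall x y, I x -> I (br x y)) /\ (forall x y, I x -> I (br y x)).

Definition nonzero_set (S : V -> Prop) : Prop := exists x, S x /\ x <> 0.

(* [I,J] = span of {[x,y] | x ∈ I, y ∈ J}: the smallest subspace containing them *)
Definition bracket_span (br : V -> V -> V) (I J : V -> Prop) (z : V) : Prop :=
  forall S : V -> Prop, subspace S ->
    (forall x y, I x -> J y -> S (br x y)) -> S z.

Definition is_zero_set (S : V -> Prop) : Prop := forall z, S z <-> z = 0.

Definition prime_algebra (br : V -> V -> V) : Prop :=
  forall I J : V -> Prop, ideal br I -> ideal br J ->
    nonzero_set I -> nonzero_set J -> ~ is_zero_set (bracket_span br I J).

Definition ran (br : V -> V -> V) (I : V -> Prop) (x : V) : Prop :=
  forall y, I y -> br y x = 0.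

End Leibniz.

(* Main.v *)
Require Import Defs.
From mathcomp Require Import all_boot all_algebra.
Import GRing.Theory.
Local Open Scope ring_scope.

Theorem proposition2p9 (F : fieldType) (V : lmodType F) (br : V -> V -> V)
  (hL : right_leibniz_algebra br) :
  prime_algebra br <->
  (forall I : V -> Prop, ideal br I -> nonzero_set I -> is_zero_set (ran br I)).
Proof.
have [[bl br2] hid] := hL.
have r0 : forall z, br z 0 = 0.
  move=> z; have := br2 1 0 0 z; rewrite !scale1r !addr0 => h.
  by apply: (@addrI _ (br z 0)); rewrite addr0 -h.
have rD : forall z x y, br z (x + y) = br z x + br z y.
  by move=> z x y; rewrite -(scale1r x) br2 !scale1r.
have rZ : forall z a x, br z (a *: x) = a *: br z x.
  by move=> z a x; rewrite -(addr0 (a *: x)) br2 r0 addr0.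
have ranP : forall I, ideal br I -> ideal br (ran br I).
  move=> I [_ [HI1 HI2]]; split; [split; [|split]|split].
  - by move=> y _; rewrite r0.
  - by move=> x y hx hy z Iz; rewrite rD hx // hy // addr0.
  - by move=> a x hx z Iz; rewrite rZ hx // scaler0.
  - move=> x y hx z Iz; rewrite hid (hx z Iz) (hx _ (HI1 z y Iz)).
    have : br 0 y = 0.
      have := bl 1 0 0 y; rewrite !scale1r !addr0 => h.
      by apply: (@addrI _ (br 0 y)); rewrite addr0 -h.
    by move=> ->; rewrite subr0.
  - move=> x y hx z Iz; rewrite hid (hx z Iz) (hx _ (HI1 z y Iz)).
    have : br 0 y = 0.
      have := bl 1 0 0 y; rewrite !scale1r !addr0 => h.
      by apply: (@addrI _ (br 0 y)); rewrite addr0 -h.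
    by move=> ->; rewrite subr0.
split.
- move=> Hp I HI [x0 [Ix0 nx0]] z; split; last by move=> ->; rewrite /ran => y _; rewrite r0.
  move=> hz; case: (eqVneq z 0) => // nz; exfalso.
  apply: (Hp I (ran br I) HI (ranP I HI)); first by exists x0.
    by exists z; split => //; apply/eqP.
  move=> w; split.
  + move=> hw; apply: (hw (fun v => v = 0)); first by split; [|split] => [|x y -> ->|a x ->]; rewrite ?addr0 ?scaler0.
    by move=> x y Ix Ry; rewrite Ry.
  + by move=> -> S [S0 _] _.
- move=> H I J HI HJ nI [y [Jy ny]] Hz; apply: ny.
  have [hr _] := H I HI nI y.
  apply: hr => x Ix; apply/(Hz (br x y)) => S _ HS; exact: HS.
Qed.
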